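(* Let $q$ be odd, $V$ an $n$-dimensional space over $\mathbb{F}_q$, $n\ge4$, $G$ one of $\mathrm{SL}(V),\mathrm{Sp}(V),\mathrm{SU}(V)$, $\mathcal T$ the set of transvections of $G$, and $X\subseteq\mathcal T$ a generating set of $G$ satisfying: (P2) ${}_VX$ spans $V$, $X_{V^*}$ spans $V^*$, $\Gamma(X)$ strongly connected; (P3) the weights of all cycles of $\Gamma(X)$ generate $\mathbb{F}_q$; (P4) if $G=\mathrm{Sp}(V)$ every cycle of $\Gamma(\mathcal T)$ is symplectic; (P5) if $G=\mathrm{SL}(V)$ and $q$ is a square, $\Gamma(X)$ contains a non-unitary cycle; (P6) the directed diameter of $\Gamma(X'')$ is at most $2$ for every $X\subseteq X''\subseteq\mathcal T$; (P7) the two-way diameter of $\Gamma(X'')$ is at most $6$ for every $X\subseteq X''\subseteq \mathcal T$. For $k\ge2$ let $L_k=L_k(X)$ be the subfield of $\mathbb{F}_q$ generated by the weights of the cycles of $\Gamma(X)$ of length at most $k$. Assume $k\ge 3$ is an integer with $L_{k-1}\ne L_k$. Then (1) $k\in\{3,4,5\}$; (2) if $k\in\{4,5\}$ and $(r_1,\dots,r_k)$ is a cycle of $\Gamma(X)$ whose weight is not in $L_{k-1}$, then there is an index $i$, $1\le i\le k$, such that $[r_i,r_{i+2}]$ is not an edge of $\Gamma(X)$ (indices mod $k$).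
   Context: Transvections $s=1+u_s\otimes\phi_s$ ($x\mapsto x+\phi_s(x)u_s$). $\Gamma(Y)$: directed graph on $Y$ with edge $[s,t]$ iff $\phi_t(u_s)\ne0$; two-way edges/paths/diameter as usual (both directions are edges). Weight of $(r_1,\dots,r_k)$: $w=\prod_{i=1}^k\phi_{r_{i+1}}(u_{r_i})$ (indices mod $k$); a $k$-tuple with nonzero weight is a cycle of length $k$. Symplectic: $w(r_1,\dots,r_k)+(-1)^{k+1}w(r_k,\dots,r_1)=0$; unitary: $w(r_1,\dots,r_k)+(-1)^{k+1}w(r_k,\dots,r_1)^{\sqrt q}=0$. ${}_VX$, $X_{V^*}$: the sets of $u_s$, resp. $\phi_s$, for $s\in X$. *)

(* Defs.v *)
From HB Require Import structures.
From mathcomp Require Import all_boot all_order all_algebra all_field.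
Set Implicit Arguments. Unset Strict Implicit. Unset Printing Implicit Defensive.
Import GRing.Theory.
Local Open Scope ring_scope.

(* Conventions: V = 'rV[F]_n (row vectors), V^* = 'cV[F]_n (column vectors),
   phi(x) = (x *m phi) 0 0.  Linear maps act on the right: x |-> x *m g.
   The transvection 1 + u (x) phi  (x |-> x + phi(x) u) is the matrix
   1%:M + phi *m u. *)

Section Defs.
Variables (F : finFieldType) (n : nat).
Local Notation M := 'M[F]_n.

Definition ev (phi : 'cV[F]_n) (x : 'rV[F]_n) : F := (x *m phi) 0 0.

Definition tv_pair (t : M) (p : 'rV[F]_n * 'cV[F]_n) : bool :=
  [&& p.1 != 0, p.2 != 0, ev p.2 p.1 == 0 & t == 1%:M + p.2 *m p.1].

Definition is_transvection (t : M) : Prop := exists p, tv_pair t p.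

(* a chosen representative (u_s, phi_s); weights and edges do not depend on it *)
Definition tv_u (t : M) : 'rV[F]_n :=
  if [pick p | tv_pair t p] is Some p then p.1 else 0.
Definition tv_phi (t : M) : 'cV[F]_n :=
  if [pick p | tv_pair t p] is Some p then p.2 else 0.

Definition tedge : rel M := fun s t => ev (tv_phi t) (tv_u s) != 0.

Definition weight (r : seq M) : F :=
  \prod_(i < size r)
     ev (tv_phi (nth 1%:M r (i.+1 %% size r))) (tv_u (nth 1%:M r i)).

Definition is_cycle (Y : M -> Prop) (r : seq M) : Prop :=
  (0 < size r)%N /\ (forall s, s \in r -> Y s) /\ weight r != 0.

Definition edge_of (Y : M -> Prop) (s t : M) : Prop := Y s /\ Y t /\ tedge s t.

Definition twoway : rel M := fun s t => tedge s t && tedge t s.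

Definition path_le (e : rel M) (Y : M -> Prop) (m : nat) (s t : M) : Prop :=
  exists p : seq M, (forall x, x \in p -> Y x) /\ (size p <= m)%N /\
    path e s p /\ last s p = t.

Definition strongly_connected (Y : M -> Prop) : Prop :=
  forall s t, Y s -> Y t -> exists m, path_le tedge Y m s t.

Definition diam_le (Y : M -> Prop) (m : nat) : Prop :=
  forall s t, Y s -> Y t -> path_le tedge Y m s t.

Definition twoway_diam_le (Y : M -> Prop) (m : nat) : Prop :=
  forall s t, Y s -> Y t -> path_le twoway Y m s t.

Definition symplectic_cycle (r : seq M) : Prop :=
  weight r + (-1) ^+ (size r).+1 * weight (rev r) = 0.

Definition unitary_cycle (r : seq M) : Prop :=
  forall q0 : nat, (q0 ^ 2 = #|F|)%N ->
    weight r + (-1) ^+ (size r).+1 * (weight (rev r)) ^+ q0 = 0.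

Definition is_square_order : Prop := exists q0 : nat, (q0 ^ 2 = #|F|)%N.

Definition is_subfield (K : {set F}) : Prop :=
  [/\ 0 \in K, 1 \in K, (forall x y, x \in K -> y \in K -> x - y \in K),
      (forall x y, x \in K -> y \in K -> x * y \in K) &
      (forall x, x \in K -> x^-1 \in K)].

Definition gen_field (P : F -> Prop) (x : F) : Prop :=
  forall K : {set F}, is_subfield K -> (forall y, P y -> y \in K) -> x \in K.

Definition Lk (Y : M -> Prop) (k : nat) : F -> Prop :=
  gen_field (fun y => exists r, is_cycle Y r /\ (size r <= k)%N /\ y = weight r).

Definition spans_V (X : {set M}) : Prop :=
  forall x : 'rV[F]_n, exists c : M -> F, x = \sum_(s in X) c s *: tv_u s.
Definition spans_Vdual (X : {set M}) : Prop :=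
  forall x : 'cV[F]_n, exists c : M -> F, x = \sum_(s in X) c s *: tv_phi s.

Inductive gen_grp (X : {set M}) : M -> Prop :=
| gen_one : gen_grp X 1%:M
| gen_in x : x \in X -> gen_grp X x
| gen_mul a b : gen_grp X a -> gen_grp X b -> gen_grp X (a *m b)
| gen_inv a : gen_grp X a -> gen_grp X (invmx a).

Inductive gkind := KSL | KSp | KSU.

(* the form B defining the group: for KSp a nondegenerate alternating form
   beta(x,y) = x B y^T; for KSU (q = q0^2) a nondegenerate hermitian form
   beta(x,y) = x B sigma(y)^T with sigma(a) = a^q0. *)
Definition form_ok (K : gkind) (B : M) : Prop :=
  match K with
  | KSL => True
  | KSp => B^T = - B /\ (forall i, B i i = 0) /\ \det B != 0
  | KSU => is_square_order /\ \det B != 0 /\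
           (forall q0 : nat, (q0 ^ 2 = #|F|)%N -> B^T = map_mx (fun a => a ^+ q0) B)
  end.

Definition in_group (K : gkind) (B : M) (g : M) : Prop :=
  match K with
  | KSL => \det g = 1
  | KSp => g *m B *m g^T = B
  | KSU => \det g = 1 /\
           (forall q0 : nat, (q0 ^ 2 = #|F|)%N ->
              g *m B *m (map_mx (fun a => a ^+ q0) g)^T = B)
  end.

Definition in_T (K : gkind) (B : M) (t : M) : Prop :=
  in_group K B t /\ is_transvection t.

End Defs.

(* Main.v *)
Require Import Defs.
From mathcomp Require Import all_boot all_order all_algebra all_field.
From mathcomp Require Import ring zify.
Import GRing.Theory.
Local Open Scope ring_scope.
Set Implicit Arguments. Unset Strict Implicit.

Section H.
Variables (F : finFieldType) (n : nat).
Local Notation M := 'M[F]_n.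

Definition aw (s t : M) : F := ev (tv_phi t) (tv_u s).

Fixpoint pw (x : M) (s : seq M) : F :=
  match s with [::] => 1 | y :: s' => aw x y * pw y s' end.

Lemma pw_cat (x : M) s1 s2 : pw x (s1 ++ s2) = pw x s1 * pw (last x s1) s2.
Proof. elim: s1 x => [|y s IH] x /=; first by rewrite mul1r. by rewrite IH mulrA. Qed.

Lemma pw_path (x : M) p : path (@tedge F n) x p -> pw x p != 0.
Proof.
elim: p x => [|y s IH] x /=; first by rewrite oner_eq0.
by case/andP => h1 h2; rewrite mulf_neq0 // IH.
Qed.

Lemma prod_pw (x : M) (s : seq M) :
  \prod_(i < size s) aw (nth 1%:M (x :: s) i) (nth 1%:M s i) = pw x s.
Proof.
elim: s x => [|y s IH] x /=; first by rewrite big_ord0.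
by rewrite big_ord_recl /= -IH.
Qed.

Lemma nth_lastx (x : M) (s : seq M) : nth 1%:M (x :: s) (size s) = last x s.
Proof. by elim: s x => [|y s IH] x //=. Qed.

Lemma weightE (x : M) (s : seq M) : weight (x :: s) = pw x (rcons s x).
Proof.
rewrite /weight /= big_ord_recr /= modnn /= -cats1 pw_cat /= mulr1.
rewrite nth_lastx -prod_pw; congr (_ * _).
apply: eq_bigr => i _ /=; rewrite modn_small ?ltnS ?ltn_ord //.
Qed.

Definition cycK (Y : M -> Prop) (K : {set F}) (m : nat) : Prop :=
  forall y, (exists r, is_cycle Y r /\ (size r <= m)%N /\ y = weight r) -> y \in K.

Lemma cycK_in Y K m (r : seq M) : cycK Y K m -> (0 < size r)%N ->
  (forall s, s \in r -> Y s) -> weight r != 0 -> (size r <= m)%N -> weight r \in K.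
Proof. by move=> H h1 h2 h3 h4; apply: H; exists r. Qed.

Lemma long_cycle (Y : M -> Prop) (K : {set F}) m :
  is_subfield K -> (6 <= m.+1)%N -> diam_le Y 2 -> cycK Y K m ->
  forall r, is_cycle Y r -> size r = m.+1 -> weight r \in K.
Proof.
move=> [K0 K1 KB KM KV] Hm Hd HK r [_ [Hin Hw]] Hs.
case: r Hin Hw Hs => [|r1 [|r2 [|r3 [|r4 t]]]] Hin Hw Hs //=; try by rewrite -Hs in Hm.
have Y1 : Y r1 by apply: Hin; rewrite inE eqxx.
have Y4 : Y r4 by apply: Hin; rewrite !inE eqxx !orbT.
have [p [Yp [sp [pp lp]]]] := Hd _ _ Y1 Y4.
have [q [Yq [sq [pq lq]]]] := Hd _ _ Y4 Y1.
have Hst : (size t + 4 = m.+1)%N by rewrite -Hs /=; lia.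
move: Hw; rewrite weightE /= => Hw.
set W := pw r4 (rcons t r1) in Hw *.
have WA : weight (r1 :: (p ++ t)) = pw r1 p * W.
  by rewrite weightE rcons_cat pw_cat lp.
have WB : weight (r4 :: (q ++ [:: r2; r3])) =
    pw r4 q * (aw r1 r2 * (aw r2 r3 * (aw r3 r4 * 1))).
  by rewrite weightE rcons_cat pw_cat lq.
have P0 := pw_path pp. have Q0 := pw_path pq.
have W0 : W != 0 by move: Hw; rewrite !mulf_eq0 !negb_or => /andP[_ /andP[_ /andP[]]].
have C0 : pw r1 (p ++ q) \in K.
  have lL : last r1 (p ++ q) = r1 by rewrite last_cat lp lq.
  have [HL|[L HL]] : p ++ q = [::] \/ exists L, p ++ q = rcons L r1.
    case E: (p ++ q) => [|z zs]; first by left.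
    right; exists (belast z zs); rewrite lastI -lL E /=; congr rcons.
  { by rewrite HL. }
  have -> : pw r1 (p ++ q) = weight (r1 :: L) by rewrite weightE HL.
  apply: cycK_in HK _ _ _ _ => //.
  - move=> s; rewrite inE => /orP[/eqP -> //|hs].
    have : s \in p ++ q by rewrite HL mem_rcons inE hs orbT.
    by rewrite mem_cat => /orP[/Yp|/Yq].
  - by rewrite weightE -HL pw_cat lp mulf_neq0.
  - have : size (p ++ q) = (size L).+1 by rewrite HL size_rcons.
    rewrite size_cat /= => hs; lia.
have A0 : weight (r1 :: (p ++ t)) \in K.
  apply: cycK_in HK _ _ _ _ => //.
  - move=> s; rewrite inE mem_cat => /orP[/eqP ->//|/orP[/Yp//|hs]].
    by apply: Hin; rewrite !inE hs !orbT.
  - by rewrite WA mulf_neq0.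
  - rewrite /= size_cat; lia.
have B0 : weight (r4 :: (q ++ [:: r2; r3])) \in K.
  apply: cycK_in HK _ _ _ _ => //.
  - move=> s; rewrite inE mem_cat => /orP[/eqP ->//|/orP[/Yq//|hs]].
    by apply: Hin; move: hs; rewrite !inE => /orP[->|->]; rewrite ?orbT.
  - rewrite WB mulf_neq0 //; move: Hw; rewrite mulr1 !mulf_eq0 !negb_or.
    by case/andP => -> /andP[-> /andP[-> _]].
  - rewrite /= size_cat /=; lia.
have -> : aw r1 r2 * (aw r2 r3 * (aw r3 r4 * W)) =
   weight (r1 :: (p ++ t)) * weight (r4 :: (q ++ [:: r2; r3])) * (pw r1 (p ++ q))^-1.
  rewrite WA WB pw_cat lp; field; by rewrite P0 Q0.
by apply: (KM); [apply: (KM)|apply: (KV)].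
Qed.

Lemma sub_in (Y : M -> Prop) (r s : seq M) :
  (forall x, x \in r -> Y x) -> all (mem r) s -> forall x, x \in s -> Y x.
Proof. by move=> H /allP A x /A /H. Qed.

Lemma chord4 Y K (r1 r2 r3 r4 : M) : is_subfield K -> cycK Y K 3 ->
  is_cycle Y [:: r1; r2; r3; r4] -> tedge r1 r3 -> tedge r3 r1 ->
  weight [:: r1; r2; r3; r4] \in K.
Proof.
move=> [K0 K1 KB KM KV] HK [_ [Hin Hw]] e13 e31.
move: Hw; rewrite !weightE /= mulr1 => Hw.
have := Hw; rewrite !mulf_eq0 !negb_or => /and4P[h12 h23 h34 h41].
rewrite /tedge -/(aw r1 r3) in e13; rewrite /tedge -/(aw r3 r1) in e31.
have A : weight [:: r1; r2; r3] \in K.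
  apply: cycK_in HK _ _ _ _ => //.
  - by apply: sub_in Hin _; rewrite /= !inE !eqxx !orbT.
  - by rewrite weightE /= mulr1 !mulf_neq0.
have B : weight [:: r3; r4; r1] \in K.
  apply: cycK_in HK _ _ _ _ => //.
  - by apply: sub_in Hin _; rewrite /= !inE !eqxx !orbT.
  - by rewrite weightE /= mulr1 !mulf_neq0.
have C : weight [:: r1; r3] \in K.
  apply: cycK_in HK _ _ _ _ => //.
  - by apply: sub_in Hin _; rewrite /= !inE !eqxx !orbT.
  - by rewrite weightE /= mulr1 !mulf_neq0.
move: A B C; rewrite !weightE /= !mulr1 => A B C.
have -> : aw r1 r2 * (aw r2 r3 * (aw r3 r4 * aw r4 r1)) =
  aw r1 r2 * (aw r2 r3 * aw r3 r1) * (aw r3 r4 * (aw r4 r1 * aw r1 r3)) *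
  (aw r1 r3 * aw r3 r1)^-1.
  by field; rewrite e13 e31.
by apply: (KM); [apply: (KM)|apply: (KV)].
Qed.

Lemma chord5 Y K (r1 r2 r3 r4 r5 : M) : is_subfield K -> cycK Y K 4 ->
  is_cycle Y [:: r1; r2; r3; r4; r5] -> tedge r1 r3 -> tedge r3 r5 ->
  weight [:: r1; r2; r3; r4; r5] \in K.
Proof.
move=> [K0 K1 KB KM KV] HK [_ [Hin Hw]] e13 e35.
move: Hw; rewrite !weightE /= mulr1 => Hw.
have := Hw; rewrite !mulf_eq0 !negb_or => /and5P[h12 h23 h34 h45 h51].
rewrite /tedge -/(aw r1 r3) in e13; rewrite /tedge -/(aw r3 r5) in e35.
have A : weight [:: r1; r3; r4; r5] \in K.
  apply: cycK_in HK _ _ _ _ => //.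
  - by apply: sub_in Hin _; rewrite /= !inE !eqxx !orbT.
  - by rewrite weightE /= mulr1 !mulf_neq0.
have B : weight [:: r1; r2; r3; r5] \in K.
  apply: cycK_in HK _ _ _ _ => //.
  - by apply: sub_in Hin _; rewrite /= !inE !eqxx !orbT.
  - by rewrite weightE /= mulr1 !mulf_neq0.
have C : weight [:: r1; r3; r5] \in K.
  apply: cycK_in HK _ _ _ _ => //.
  - by apply: sub_in Hin _; rewrite /= !inE !eqxx !orbT.
  - by rewrite weightE /= mulr1 !mulf_neq0.
move: A B C; rewrite !weightE /= !mulr1 => A B C.
have -> : aw r1 r2 * (aw r2 r3 * (aw r3 r4 * (aw r4 r5 * aw r5 r1))) =
  aw r1 r3 * (aw r3 r4 * (aw r4 r5 * aw r5 r1)) *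
  (aw r1 r2 * (aw r2 r3 * (aw r3 r5 * aw r5 r1))) *
  (aw r1 r3 * (aw r3 r5 * aw r5 r1))^-1.
  by field; rewrite e13 e35 h51.
by apply: (KM); [apply: (KM)|apply: (KV)].
Qed.

Lemma Lk_mono (Y : M -> Prop) m m' x : (m <= m')%N -> Lk Y m x -> Lk Y m' x.
Proof.
move=> h H K HK HP; apply: H => // y [r [c [s ->]]]; apply: HP.
by exists r; split => //; split => //; apply: leq_trans h.
Qed.

Lemma Lk_step (Y : M -> Prop) m :
  (forall K, is_subfield K -> cycK Y K m ->
     forall r, is_cycle Y r -> size r = m.+1 -> weight r \in K) ->
  forall x, Lk Y m.+1 x -> Lk Y m x.
Proof.
move=> H x Hx K HK HP; apply: Hx => // y [r [c [s ->]]].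
rewrite leq_eqVlt in s; case/orP: s => [/eqP e|l].
  exact: H.
by apply: HP; exists r.
Qed.
End H.

From Stdlib Require Import Classical.

Theorem lemma4p3 (F : finFieldType) (n : nat) (K : gkind) (B : 'M[F]_n)
  (X : {set 'M[F]_n}) (k : nat) :
  odd #|F| -> (4 <= n)%N -> form_ok K B ->
  (* X is a set of transvections of G generating G *)
  (forall x, x \in X -> in_T K B x) ->
  (forall g, in_group K B g <-> gen_grp X g) ->
  (* (P2) *)
  spans_V X -> spans_Vdual X -> strongly_connected (fun s => s \in X) ->
  (* (P3) *)
  (forall x : F, gen_field (fun y => exists r, is_cycle (fun s => s \in X) r /\ y = weight r) x) ->
  (* (P4) *)
  (K = KSp -> forall r, is_cycle (in_T K B) r -> symplectic_cycle r) ->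
  (* (P5) *)
  (K = KSL -> is_square_order F ->
     exists r, is_cycle (fun s => s \in X) r /\ ~ unitary_cycle r) ->
  (* (P6), (P7) *)
  (forall X'' : {set 'M[F]_n}, X \subset X'' -> (forall t, t \in X'' -> in_T K B t) ->
     diam_le (fun s => s \in X'') 2 /\ twoway_diam_le (fun s => s \in X'') 6) ->
  (3 <= k)%N ->
  ~ (forall x, Lk (fun s => s \in X) k.-1 x <-> Lk (fun s => s \in X) k x) ->
  (k \in [:: 3; 4; 5]%N) /\
  ((k \in [:: 4; 5]%N) ->
   forall r : seq 'M[F]_n, size r = k -> is_cycle (fun s => s \in X) r ->
     ~ Lk (fun s => s \in X) k.-1 (weight r) ->
     exists i : 'I_k,
       ~ edge_of (fun s => s \in X) (nth 1%:M r i) (nth 1%:M r ((i + 2) %% k))).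
Proof.
move=> _ _ _ HT _ _ _ _ _ _ _ P6 k3 Hneq.
have Hd := (P6 X (subxx X) HT).1.
split.
  case: (boolP (k \in [:: 3; 4; 5]%N)) => // hk; exfalso; apply: Hneq.
  have k6 : (6 <= k)%N by move: hk; rewrite !inE; lia.
  case: k k3 k6 {hk} => [|m] // _ k6 x; split; first exact: Lk_mono.
  apply: Lk_step => K' HK HcK r Hc Hs.
  exact: (long_cycle HK k6 Hd HcK Hc Hs).
move=> hk r Hs Hc Hnot; apply: NNPP => Hno.
have E : forall i : 'I_k, edge_of (fun s => s \in X) (nth 1%:M r i) (nth 1%:M r ((i + 2) %% k)).
  by move=> i; apply: NNPP => h; apply: Hno; exists i.
apply: Hnot => K' HK HcK; clear Hno.
move: hk; rewrite !inE => /orP[/eqP ek|/eqP ek]; rewrite {}ek in Hs E HcK.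
  case: r Hs Hc E HcK => [|r1 [|r2 [|r3 [|r4 [|? ?]]]]] // _ Hc E HcK.
  have [_ [_ e13]] := E (@Ordinal 4 0 isT).
  change (is_true (tedge r1 r3)) in e13.
  have [_ [_ e31]] := E (@Ordinal 4 2 isT).
  change (is_true (tedge r3 r1)) in e31.
  exact: (@chord4 _ _ (fun s => s \in X) K' r1 r2 r3 r4 HK HcK Hc e13 e31).
case: r Hs Hc E HcK => [|r1 [|r2 [|r3 [|r4 [|r5 [|? ?]]]]]] // _ Hc E HcK.
have [_ [_ e13]] := E (@Ordinal 5 0 isT).
change (is_true (tedge r1 r3)) in e13.
have [_ [_ e35]] := E (@Ordinal 5 2 isT).
change (is_true (tedge r3 r5)) in e35.
exact: (@chord5 _ _ (fun s => s \in X) K' r1 r2 r3 r4 r5 HK HcK Hc e13 e35).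
Qed.
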